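(* For fixed $0<r<1$, as $n\to\infty$, $$\sum_{j}P_{n,r}(j)\Big(\frac{2j}{n}-r\Big)^2=\frac{1-r^2}{n}-\frac{2(1-r)}{r}\,\frac1{n^2}+O(\gamma^n)$$ for some $\gamma\in(0,1)$ depending only on $r$, where the sum runs over $j\in\{n/2,n/2-1,\dots\}$, $j\ge0$.
   Context: For $n\ge1$ and $0\le r<1$, $P_{n,r}$ is the probability distribution on $j\in\{n/2,n/2-1,\dots\}\cap[0,\infty)$ given by $$P_{n,r}(j)=\Big(\binom{n}{n/2-j}-\binom{n}{n/2-j-1}\Big)\sum_{m=-j}^{j}\Big(\frac{1-r}{2}\Big)^{n/2-m}\Big(\frac{1+r}{2}\Big)^{n/2+m},$$ with $\binom{n}{-1}=0$. (It is the distribution of the total-spin label $j$ obtained by projecting $\rho^{\otimes n}$, for a qubit state $\rho$ with Bloch vector of length $r$, onto the isotypic components of the $SU(2)$ decomposition of $(\mathbb{C}^2)^{\otimes n}$.) *)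

(* Defs.v *)
From mathcomp Require Import all_boot all_order all_algebra.
From mathcomp Require Import reals.
Set Implicit Arguments. Unset Strict Implicit. Unset Printing Implicit Defensive.
Import Order.TTheory GRing.Theory Num.Theory.
Local Open Scope ring_scope.

(* The spin label j in {n/2, n/2-1, ...} /\ [0,oo) is encoded by the natural
   number k = n/2 - j, with 0 <= k <= n./2 (so 2j = n - 2k).
   binom(n, n/2-j-1) = binom(n, k-1), which is 0 when k = 0. *)
Definition binom_m1 (R : realType) (n k : nat) : R :=
  if k is k'.+1 then ('C(n, k'))%:R else 0.

(* P_{n,r}(j) with j = n/2 - k.  The inner sum over m = -j..j is reindexed by
   l = n/2 - m, which ranges over k..n-k, with n/2 + m = n - l. *)
Definition Pnr (R : realType) (n : nat) (r : R) (k : nat) : R :=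
  (('C(n, k))%:R - binom_m1 R n k) *
  \sum_(k <= l < (n - k).+1) ((1 - r) / 2) ^+ l * ((1 + r) / 2) ^+ (n - l).

Definition twoj_over_n (R : realType) (n k : nat) : R :=
  ((n - 2 * k)%N)%:R / n%:R.

Definition sqdev (R : realType) (n : nat) (r : R) : R :=
  \sum_(0 <= k < (n./2).+1) Pnr n r k * (twoj_over_n R n k - r) ^+ 2.

(* Main.v *)
Require Import Defs.
From mathcomp Require Import all_boot all_order all_algebra.
From mathcomp Require Import reals.
From mathcomp Require Import ring lra zify.
Import Order.TTheory GRing.Theory Num.Theory.
Local Open Scope ring_scope.

Section S.
Variable R : realType.

Definition B (p q : R) n (g : nat -> R) :=
  \sum_(0 <= k < n.+1) 'C(n,k)%:R * (q^+k * p^+(n-k)) * g k.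

Lemma Gsum (p q a b : R) (g : nat -> R) n :
  \sum_(0 <= k < n.+2) (a * 'C(n,k)%:R + b * binom_m1 R n k) * (q^+k * p^+(n.+1 - k)) * g k
  = a * p * B p q n g + b * q * B p q n (fun k => g k.+1).
Proof.
under eq_bigr do rewrite !mulrDl. rewrite big_split /=.
congr (_ + _).
  rewrite big_nat_recr //= bin_small // !(mulr0, mul0r) addr0.
  rewrite /B mulr_sumr; apply: eq_big_nat => k /andP[_ hk].
  rewrite subSn // exprS; ring.
rewrite big_nat_recl //= !(mulr0, mul0r, add0r).
rewrite /B mulr_sumr; apply: eq_big_nat => k /andP[_ hk].
rewrite subSS exprS; ring.
Qed.

Lemma Brec (p q : R) n g :
  B p q n.+1 g = p * B p q n g + q * B p q n (fun k => g k.+1).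
Proof.
rewrite -[p * _]mul1r -[q * _]mul1r mulrA mulrA -Gsum /B.
apply: eq_big_nat => k _.
case: k => [|k] /=; first by rewrite !bin0 mulr0 addr0 mul1r.
by rewrite binS natrD !mul1r addrC.
Qed.

Lemma B_add p q n f g : B p q n (fun k => f k + g k) = B p q n f + B p q n g.
Proof. rewrite /B -big_split /=; apply: eq_bigr => k _; ring. Qed.
Lemma B_scale p q n c f : B p q n (fun k => c * f k) = c * B p q n f.
Proof. rewrite /B mulr_sumr; apply: eq_bigr => k _; ring. Qed.
Lemma B_ext p q n f g : (forall k, f k = g k) -> B p q n f = B p q n g.
Proof. move=> h; rewrite /B; apply: eq_bigr => k _; by rewrite h. Qed.

Lemma B1 p q n : p + q = 1 -> B p q n (fun _ => 1) = 1.
Proof.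
move=> h; elim: n => [|n IH]; first by rewrite /B big_nat1 bin0 subnn !expr0 /=; ring.
by rewrite Brec IH !mulr1.
Qed.

Lemma Bk p q n : p + q = 1 -> B p q n (fun k => k%:R) = n%:R * q.
Proof.
move=> h; elim: n => [|n IH]; first by rewrite /B big_nat1 bin0 subnn !expr0 /=; ring.
rewrite Brec (@B_ext p q n (fun k => k.+1%:R) (fun k => k%:R + 1)); last by move=> k; rewrite -natr1.
rewrite B_add IH B1 //.
have -> : p = 1 - q by rewrite -h; ring.
rewrite -natr1; ring.
Qed.

Lemma Bk2 p q n : p + q = 1 -> B p q n (fun k => k%:R ^+ 2) = n%:R * p * q + n%:R ^+ 2 * q ^+ 2.
Proof.
move=> h; elim: n => [|n IH]; first by rewrite /B big_nat1 bin0 subnn !expr0 /=; ring.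
rewrite Brec (@B_ext p q n (fun k => k.+1%:R ^+ 2) (fun k => k%:R ^+ 2 + (2 * k%:R + 1))); last by move=> k; rewrite -natr1; ring.
rewrite B_add B_add B_scale IH B1 // Bk //.
have -> : p = 1 - q by rewrite -h; ring.
rewrite -natr1; ring.
Qed.


Lemma Bquad p q n a b c : p + q = 1 ->
  B p q n (fun k => a + b * k%:R + c * k%:R ^+ 2)
  = a + b * (n%:R * q) + c * (n%:R * p * q + n%:R ^+ 2 * q ^+ 2).
Proof.
move=> h. rewrite B_add B_add.
rewrite (@B_ext p q n (fun _ => a) (fun _ => a * 1)); last by move=> k; rewrite mulr1.
by rewrite !B_scale B1 // Bk // Bk2 // mulr1.
Qed.

Lemma telesc (p q : R) n k : (k <= n - k)%N ->
  (p - q) * \sum_(k <= l < (n - k).+1) q ^+ l * p ^+ (n - l)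
  = q ^+ k * p ^+ (n.+1 - k) - q ^+ (n.+1 - k) * p ^+ k.
Proof.
move=> hk.
have hkn : (k <= n)%N by lia.
rewrite mulr_sumr.
rewrite (eq_big_nat _ _ (F2 := fun l => (- (q ^+ l.+1 * p ^+ (n.+1 - l.+1))) - (- (q ^+ l * p ^+ (n.+1 - l))))); last first.
  move=> l /andP[_ hl]. have hln : (l <= n)%N by lia.
  rewrite subSS (subSn hln) exprS exprS; ring.
rewrite telescope_sumr; last by lia.
rewrite subSS subKn // subSn //; ring.
Qed.

Lemma binle n k : ('C(n, k) <= 2 ^ n)%N.
Proof.
elim: n k => [|n IH] [|k] //=.
  by rewrite bin0 expn_gt0.
rewrite binS expnS mul2n -addnn; exact: leq_add.
Qed.

Lemma sqle (p q : R) a b : 0 <= q -> q <= p -> (b <= a)%N ->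
  (q ^+ a * p ^+ b) ^+ 2 <= (p * q) ^+ (a + b).
Proof.
move=> q0 qp hba.
have p0 : 0 <= p by apply: le_trans qp.
rewrite -(subnK hba).
set d := (a - b)%N.
have -> : (q ^+ (d + b) * p ^+ b) ^+ 2 = (p * q) ^+ (b + b) * (q ^+ d * q ^+ d).
  rewrite !exprD !exprMn; ring.
have -> : (p * q) ^+ (d + b + b) = (p * q) ^+ (b + b) * (p ^+ d * q ^+ d).
  rewrite !exprD !exprMn; ring.
apply: ler_wpM2l; first by apply: exprn_ge0; apply: mulr_ge0.
apply: ler_wpM2r; first exact: exprn_ge0.
by apply: lerXn2r; rewrite // nnegrE.
Qed.


Section T.
Variable r : R.
Hypothesis hr0 : 0 < r.
Hypothesis hr1 : r < 1.
Let p : R := (1 + r) / 2.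
Let q : R := (1 - r) / 2.
Let d : R := 1 - r ^+ 2 / 2.

Definition H n k : R := ((n%:R - 2 * k%:R) / n%:R - r) ^+ 2.

Lemma mb n a b : (b <= a)%N -> (a + b = n.+1)%N ->
  2 ^+ n.+1 * (q ^+ a * p ^+ b) <= d ^+ n.
Proof.
move=> hba hab.
have h0 := hr0; have h1 := hr1.
have q0 : 0 <= q by rewrite /q; lra.
have qp : q <= p by rewrite /q /p; lra.
have p0 : 0 <= p by rewrite /p; lra.
have r2 : r ^+ 2 <= 1 by rewrite expr2; apply: mulr_ile1; apply: ltW.
have r20 : 0 <= r ^+ 2 by apply: sqr_ge0.
have d0 : 0 <= d by rewrite /d; lra.
have d1 : d <= 1 by rewrite /d; lra.
have m0 : 0 <= q ^+ a * p ^+ b by apply: mulr_ge0; apply: exprn_ge0.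
apply: (@le_trans _ _ (d ^+ n.+1)); last by apply: ler_wiXn2l.
rewrite -(@ler_pXn2r _ 2) // ?nnegrE; last first.
- exact: exprn_ge0.
- by apply: mulr_ge0 => //; apply: exprn_ge0.
rewrite exprMn.
apply: (@le_trans _ _ (2 ^+ n.+1 ^+ 2 * (p * q) ^+ n.+1)).
  apply: ler_wpM2l; first by apply: exprn_ge0; apply: exprn_ge0.
  by rewrite -hab; apply: sqle.
rewrite -exprM mulnC exprM -exprMn -exprM mulnC exprM.
apply: lerXn2r; rewrite ?nnegrE.
- by apply: mulr_ge0; [apply: exprn_ge0 | apply: mulr_ge0].
- exact: exprn_ge0.
rewrite /p /q /d; nra.
Qed.

Lemma cbound n k : `|('C(n, k))%:R - binom_m1 R n k| <= 2 ^+ n.+1.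
Proof.
have h2 : binom_m1 R n k <= 2 ^+ n.
  case: k => [|k] /=; first by apply: exprn_ge0.
  by rewrite -natrX ler_nat binle.
have h3 : 0 <= binom_m1 R n k by clear h2; case: k => [|k] //=.
have h1 : (('C(n, k))%:R : R) <= 2 ^+ n.
  by rewrite -natrX ler_nat binle.
have h4 : (0 : R) <= ('C(n, k))%:R by [].
rewrite exprS ler_norml; apply/andP; split; lra.
Qed.

Lemma Hbound n k : (1 <= n)%N -> (k <= n.+1)%N -> `|H n k| <= 16.
Proof.
move=> hn hk.
have h0 := hr0; have h1 := hr1.
have n0 : (0 : R) < n%:R by rewrite ltr0n.
have hk2 : (k%:R : R) <= 2 * n%:R.
  by rewrite -natrM ler_nat; lia.
have k0 : (0 : R) <= k%:R by [].
set x := (n%:R - 2 * k%:R) / n%:R - r.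
have ex : x = 1 - 2 * (k%:R / n%:R) - r by rewrite /x; field; rewrite gt_eqF.
have hkn : (k%:R / n%:R : R) <= 2 by rewrite ler_pdivrMr // mulrC.
have hkn0 : 0 <= (k%:R / n%:R : R) by apply: divr_ge0 => //; apply: ltW.
rewrite /H -/x ger0_norm ?sqr_ge0 //.
rewrite ex. nra.
Qed.

Lemma termb n k a b : (b <= a)%N -> (a + b = n.+1)%N -> (1 <= n)%N -> (k <= n.+1)%N ->
  `|(('C(n, k))%:R - binom_m1 R n k) * (q ^+ a * p ^+ b) * H n k| <= 16 * d ^+ n.
Proof.
move=> hba hab hn hk.
have h0 := hr0; have h1 := hr1.
have q0 : 0 <= q by rewrite /q; lra.
have p0 : 0 <= p by rewrite /p; lra.
have m0 : 0 <= q ^+ a * p ^+ b by apply: mulr_ge0; apply: exprn_ge0.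
rewrite normrM normrM (ger0_norm m0) mulrC.
apply: ler_pM; rewrite ?normr_ge0 ?Hbound //.
  by apply: mulr_ge0 => //; apply: normr_ge0.
apply: le_trans (@mb n a b hba hab).
by apply: ler_wpM2r => //; apply: cbound.
Qed.


Definition mainv n : R := (1 - r ^+ 2) / n%:R - (2 * (1 - r) / r) * (1 / (n%:R ^+ 2)).

Lemma mainB n : (1 <= n)%N ->
  p * B p q n (H n) - q * B p q n (fun k => H n k.+1) = r * mainv n.
Proof.
move=> hn.
have h0 := hr0.
have n0 : (n%:R : R) != 0 by rewrite pnatr_eq0 -lt0n.
have r0 : r != 0 by rewrite gt_eqF.
have pq : p + q = 1 by rewrite /p /q; field.
rewrite (@B_ext p q n (H n) (fun k => (1 - r) ^+ 2 + (- 4 * (1 - r) / n%:R) * k%:R + (4 / n%:R ^+ 2) * k%:R ^+ 2)); last first.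
  by move=> k; rewrite /H; field.
rewrite (@B_ext p q n (fun k => H n k.+1) (fun k => (1 - r - 2 / n%:R) ^+ 2 + (- 4 * (1 - r - 2 / n%:R) / n%:R) * k%:R + (4 / n%:R ^+ 2) * k%:R ^+ 2)); last first.
  by move=> k; rewrite /H -natr1; field.
rewrite !Bquad // /mainv /p /q; field.
by rewrite r0 n0.
Qed.

Lemma fullsum n : (1 <= n)%N ->
  \sum_(0 <= k < n.+2) (('C(n, k))%:R - binom_m1 R n k) * (q ^+ k * p ^+ (n.+1 - k)) * H n k
  = r * mainv n.
Proof.
move=> hn; rewrite -mainB //.
have := Gsum p q 1 (-1) (H n) n; rewrite !mul1r mulN1r mulNr => <-.
apply: eq_big_nat => k _; ring.
Qed.

Lemma rsq n : (1 <= n)%N ->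
  r * sqdev n r = \sum_(0 <= k < (n./2).+1)
     (('C(n, k))%:R - binom_m1 R n k) * (q ^+ k * p ^+ (n.+1 - k) - q ^+ (n.+1 - k) * p ^+ k) * H n k.
Proof.
move=> hn.
rewrite /sqdev mulr_sumr; apply: eq_big_nat => k /andP[_ hk].
have hk2 : (2 * k <= n)%N by rewrite -divn2 in hk; lia.
have hk3 : (k <= n - k)%N by lia.
rewrite /Pnr /twoj_over_n -/p -/q.
have hS := @telesc p q n k hk3.
rewrite (_ : p - q = r) in hS; last by rewrite /p /q; field.
rewrite -hS /H natrB // natrM; ring.
Qed.

Lemma sumbound (F : nat -> R) (c : R) m M n : 0 <= c -> (m <= M)%N -> (M <= n.+2)%N ->
  (forall k, (m <= k < M)%N -> `|F k| <= c) ->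
  `|\sum_(m <= k < M) F k| <= c * (n.+2)%:R.
Proof.
move=> c0 hmM hM hF.
apply: le_trans (ler_norm_sum _ _ _) _.
apply: le_trans (ler_sum_nat hF) _.
rewrite sumr_const_nat -[c *+ _]mulr_natr.
apply: ler_wpM2l => //; rewrite ler_nat; lia.
Qed.

Lemma errbound n : (1 <= n)%N ->
  `|sqdev n r - mainv n| <= 32 * (n.+2)%:R * d ^+ n / r.
Proof.
move=> hn.
have h0 := hr0.
set c := fun k => ('C(n, k))%:R - binom_m1 R n k.
set E1 := \sum_(0 <= k < (n./2).+1) c k * (q ^+ (n.+1 - k) * p ^+ k) * H n k.
set E2 := \sum_((n./2).+1 <= k < n.+2) c k * (q ^+ k * p ^+ (n.+1 - k)) * H n k.
have hdn : 0 <= 16 * d ^+ n.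
  apply: mulr_ge0 => //; apply: exprn_ge0; rewrite /d.
  have r2 : r ^+ 2 <= 1 by rewrite expr2; apply: mulr_ile1; apply: ltW.
  have h1 := hr1. lra.
have hE : r * (sqdev n r - mainv n) = - (E1 + E2).
  rewrite mulrBr rsq // -fullsum //.
  rewrite (@big_cat_nat _ _ _ (n./2).+1 0 n.+2) //=; last by rewrite -divn2; lia.
  rewrite /E1 /E2 /c.
  rewrite (_ : \sum_(0 <= k < (n./2).+1) _ = \sum_(0 <= k < (n./2).+1)
     ((('C(n, k))%:R - binom_m1 R n k) * (q ^+ k * p ^+ (n.+1 - k)) * H n k
      - (('C(n, k))%:R - binom_m1 R n k) * (q ^+ (n.+1 - k) * p ^+ k) * H n k)); last first.
    by apply: eq_bigr => k _; ring.
  rewrite sumrB; ring.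
have b1 : `|E1| <= 16 * d ^+ n * (n.+2)%:R.
  apply: sumbound => //; first by rewrite -divn2; lia.
  move=> k /andP[_ hk]; rewrite -divn2 in hk.
  apply: termb; lia.
have b2 : `|E2| <= 16 * d ^+ n * (n.+2)%:R.
  apply: sumbound => //; first by rewrite -divn2; lia.
  move=> k /andP[hk1 hk]; rewrite -divn2 in hk1.
  apply: termb; lia.
have -> : sqdev n r - mainv n = - (E1 + E2) / r.
  by rewrite -hE; field; rewrite gt_eqF.
rewrite normrM normrN normfV (gtr0_norm h0) ler_pM2r ?invr_gt0 //.
apply: le_trans (ler_normD _ _) _.
lra.
Qed.

End T.

Lemma bern (x : R) n : 0 <= x -> 1 + n%:R * x <= (1 + x) ^+ n.
Proof.
move=> x0; elim: n => [|n IH]; first by rewrite mul0r addr0 expr0.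
rewrite exprSr.
apply: (@le_trans _ _ ((1 + n%:R * x) * (1 + x))); last first.
  by apply: ler_wpM2r => //; lra.
have : 0 <= n%:R * x * x by apply: mulr_ge0 => //; apply: mulr_ge0.
rewrite -natr1. nra.
Qed.

End S.

Theorem mainTheorem11 (R : realType) (r : R) (hr0 : 0 < r) (hr1 : r < 1) :
  exists gamma : R, [/\ 0 < gamma, gamma < 1 &
    exists (C : R) (N : nat), forall n : nat, (N <= n)%N ->
      `| sqdev n r
         - ((1 - r ^+ 2) / n%:R - (2 * (1 - r) / r) * (1 / (n%:R ^+ 2))) |
      <= C * gamma ^+ n].
Proof.
set d : R := 1 - r ^+ 2 / 2.
have r2 : r ^+ 2 <= 1 by rewrite expr2; apply: mulr_ile1; apply: ltW.
have r20 : 0 < r ^+ 2 by apply: exprn_gt0.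
have d0 : 0 < d by rewrite /d; lra.
have d1 : d < 1 by rewrite /d; lra.
set g : R := (1 + d) / 2.
set x : R := g / d - 1.
have x0 : 0 < x.
  rewrite /x subr_gt0 ltr_pdivlMr // mul1r /g; lra.
have xd : (1 + x) * d = g by rewrite /x; field; rewrite gt_eqF.
exists g; split; [rewrite /g; lra | rewrite /g; lra | ].
exists (32 * (2 + 1 / x) / r), 1%N => n hn.
apply: le_trans (@errbound R r hr0 hr1 n hn) _.
rewrite -/d.
suff key : n.+2%:R * d ^+ n <= (2 + 1 / x) * g ^+ n.
  have -> : 32 * n.+2%:R * d ^+ n / r = (32 / r) * (n.+2%:R * d ^+ n) by ring.
  have -> : 32 * (2 + 1 / x) / r * g ^+ n = (32 / r) * ((2 + 1 / x) * g ^+ n) by ring.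
  apply: ler_wpM2l => //; apply: divr_ge0 => //; exact: ltW.
rewrite -xd exprMn mulrA ler_pM2r; last by apply: exprn_gt0.
apply: (@le_trans _ _ ((2 + 1 / x) * (1 + n%:R * x))); last first.
  apply: ler_wpM2l; last by apply: bern; lra.
  have : 0 < 1 / x by rewrite divr_gt0.
  lra.
have e : (2 + 1 / x) * (1 + n%:R * x) = (n.+2)%:R + (1/x + 2 * n%:R * x).
  by rewrite -[n.+2]addn2 natrD; field; rewrite gt_eqF.
rewrite e lerDl.
have : 0 < 1 / x by rewrite divr_gt0.
have : 0 <= n%:R * x by apply: mulr_ge0 => //; apply: ltW.
lra.
Qed.
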